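(* For every integer $n\ge 2$, \[ x\sum_{k=1}^{n}\binom{n}{k}\,{}_{H}w_{k}(x)=(x+1)\,{}_{H}w_{n}(x)-(x+1)\,w_{n-1}(x). \]
   Context: $\genfrac{\{}{\}}{0pt}{}{n}{k}$ denotes the Stirling numbers of the second kind. The geometric polynomials are $w_n(x)=\sum_{k=0}^{n}\genfrac{\{}{\}}{0pt}{}{n}{k}k!\,x^k$. With $H_k=\sum_{i=1}^k 1/i$, the harmonic geometric polynomials are ${}_{H}w_n(x)=\sum_{k=1}^{n}\genfrac{\{}{\}}{0pt}{}{n}{k}k!\,H_k\,x^k$. *)

(* Defs.v *)
From mathcomp Require Import all_boot all_order all_algebra.
Set Implicit Arguments. Unset Strict Implicit. Unset Printing Implicit Defensive.
Import GRing.Theory Num.Theory.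
Local Open Scope ring_scope.

Fixpoint stirling2 (n k : nat) : nat :=
  match n, k with
  | 0%N, 0%N => 1%N
  | 0%N, _.+1 => 0%N
  | _.+1, 0%N => 0%N
  | n'.+1, k'.+1 => (k'.+1 * stirling2 n' k'.+1 + stirling2 n' k')%N
  end.

Definition harmonic {R : numFieldType} (k : nat) : R :=
  \sum_(1 <= i < k.+1) (i%:R)^-1.

Definition geom_poly {R : numFieldType} (n : nat) (x : R) : R :=
  \sum_(0 <= k < n.+1) (stirling2 n k * k`!)%:R * x ^+ k.

Definition harm_geom_poly {R : numFieldType} (n : nat) (x : R) : R :=
  \sum_(1 <= k < n.+1) (stirling2 n k * k`!)%:R * harmonic k * x ^+ k.

(* Main.v *)
Require Import Defs.
From mathcomp Require Import all_boot all_order all_algebra.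
From mathcomp Require Import ring lra zify.
Import GRing.Theory Num.Theory.
Local Open Scope ring_scope.

Lemma stir_big n k : (n < k)%N -> stirling2 n k = 0%N.
Proof.
elim: n k => [|n IH] [|k] //= H.
by rewrite !IH // ?muln0 // ltnW.
Qed.

Lemma stir_bin n k :
  (\sum_(0 <= j < n.+1) 'C(n, j) * stirling2 j k)%N = stirling2 n.+1 k.+1.
Proof.
elim: n k => [|n IH] k.
  rewrite big_nat1 bin0 mul1n /=; case: k => [|k] /=; by rewrite ?muln0 ?addn0.
rewrite big_nat_recl //.
under eq_bigr => j _ do rewrite binS mulnDl.
rewrite big_split /= addnA.
have -> : ('C(n.+1, 0) * stirling2 0 k + \sum_(0 <= i < n.+1) 'C(n, i.+1) * stirling2 i.+1 k)%N
   = (\sum_(0 <= j < n.+1) 'C(n, j) * stirling2 j k)%N.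
  rewrite bin0 -(bin0 n) -(big_nat_recl _ _ (fun j => 'C(n, j) * stirling2 j k)%N) //.
  by rewrite big_nat_recr //= bin_small // mul0n addn0.
rewrite IH.
case: k => [|k].
  rewrite big1 ?addn0; last by move=> j _; rewrite muln0.
  by rewrite /= !mul1n.
under eq_bigr => j _ do rewrite mulnDr mulnCA.
rewrite big_split -big_distrr !IH.
rewrite [stirling2 n.+1 k.+2]/= [stirling2 n.+1 k.+1]/=.
rewrite /=; nia.
Qed.

Lemma big_extend (R : zmodType) (f : nat -> R) N M :
  (N <= M)%N -> (forall k, (N <= k)%N -> f k = 0) ->
  \sum_(0 <= k < N) f k = \sum_(0 <= k < M) f k.
Proof.
move=> NM f0; rewrite (@big_cat_nat _ _ _ N 0 M _ _ (leq0n N) NM) /=.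
rewrite [X in _ = _ + X]big_nat_cond [X in _ = _ + X]big1 ?addr0 // => k /andP[/andP[Hk _] _].
exact: f0.
Qed.

Lemma harm0 (R : numFieldType) : harmonic 0 = 0 :> R.
Proof. by rewrite /harmonic big_geq. Qed.

Lemma harmS (R : numFieldType) k : harmonic k.+1 = harmonic k + (k.+1%:R)^-1 :> R.
Proof. by rewrite /harmonic big_nat_recr. Qed.

Lemma nat_ne0 (R : numFieldType) k : (k.+1%:R : R) != 0.
Proof. by rewrite pnatr_eq0. Qed.

Lemma hw_full (R : numFieldType) n N (x : R) : (n < N)%N ->
  harm_geom_poly n x = \sum_(0 <= k < N) (stirling2 n k * k`!)%:R * harmonic k * x ^+ k.
Proof.
move=> nN; rewrite /harm_geom_poly.
rewrite -(@big_extend _ (fun k => (stirling2 n k * k`!)%:R * harmonic k * x ^+ k) n.+1 N) //.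
  by rewrite (@big_ltn _ _ _ 0) // harm0 mulr0 mul0r add0r.
by move=> k Hk; rewrite stir_big // mul0n mul0r mul0r.
Qed.

Lemma w_full (R : numFieldType) n N (x : R) : (n < N)%N ->
  geom_poly n x = \sum_(0 <= k < N) (stirling2 n k * k`!)%:R * x ^+ k.
Proof.
move=> nN; rewrite /geom_poly.
rewrite -(@big_extend _ (fun k => (stirling2 n k * k`!)%:R * x ^+ k) n.+1 N) //.
by move=> k Hk; rewrite stir_big // mul0n mul0r.
Qed.

Lemma hw0 (R : numFieldType) (x : R) : harm_geom_poly 0 x = 0.
Proof. by rewrite /harm_geom_poly big_geq. Qed.

Lemma sum_shift (R : numFieldType) (f : nat -> R) N :
  \sum_(0 <= i < N.+1) f i = f 0%N + \sum_(0 <= i < N) f i.+1.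
Proof. exact: big_nat_recl. Qed.

Lemma stirS n k : stirling2 n.+1 k.+1 = (k.+1 * stirling2 n k.+1 + stirling2 n k)%N.
Proof. by []. Qed.

Theorem proposition1 (R : numFieldType) (n : nat) (x : R) :
  (2 <= n)%N ->
  x * (\sum_(1 <= k < n.+1) 'C(n, k)%:R * harm_geom_poly k x)
  = (x + 1) * harm_geom_poly n x - (x + 1) * geom_poly n.-1 x.
Proof.
case: n => [|[|m]] // _ /=.
pose g k := (stirling2 m.+2 k * k`!)%:R * harmonic k * x ^+ k.
pose u k := (stirling2 m.+1 k * k`!)%:R * x ^+ k.
have E1 : \sum_(1 <= k < m.+3) 'C(m.+2, k)%:R * harm_geom_poly k x =
   \sum_(0 <= k < m.+4) (stirling2 m.+3 k.+1 * k`!)%:R * harmonic k * x ^+ k.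
  rewrite [RHS](eq_bigr (fun k => \sum_(0 <= j < m.+3) 'C(m.+2, j)%:R *
        ((stirling2 j k * k`!)%:R * harmonic k * x ^+ k))); last first.
    move=> k _; rewrite -stir_bin natrM natr_sum mulr_suml mulr_suml mulr_suml.
    by apply: eq_bigr => j _; rewrite !natrM; ring.
  rewrite exchange_big_nat /= [RHS](@big_ltn _ _ _ 0) // -mulr_sumr.
  rewrite -(hw_full _ 0 m.+4 x) // hw0 mulr0 add0r.
  apply: eq_big_nat => j /andP[_ Hj]; rewrite (hw_full _ j m.+4) ?mulr_sumr //.
  by apply: leq_trans Hj _.
have Tk : forall k, x * ((stirling2 m.+3 k.+1 * k`!)%:R * harmonic k * x ^+ k)
    = g k.+1 - u k.+1 - x * u k + x * g k.
  move=> k; rewrite /g /u (stirS m.+2 k) harmS factS.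
  set a := stirling2 m.+2 k.+1; set b := stirling2 m.+2 k.
  set c := stirling2 m.+1 k.+1; set d := stirling2 m.+1 k.
  have ha : a = (k.+1 * c + d)%N by [].
  clearbody a b c d; rewrite ha.
  rewrite !natrM !natrD !natrM !exprS.
  by field; rewrite addrC natr1 nat_ne0.
rewrite E1 mulr_sumr (eq_bigr _ (fun k _ => Tk k)) !big_split /= !sumrN.
rewrite -!mulr_sumr.
have Hg : \sum_(0 <= i < m.+4) g i.+1 = harm_geom_poly m.+2 x.
  rewrite (hw_full _ m.+2 m.+4.+1 x ltac:(lia)) //. by rewrite [RHS](@sum_shift R _ m.+4) harm0 mulr0 mul0r add0r.
have Hu : \sum_(0 <= i < m.+4) u i.+1 = geom_poly m.+1 x.
  rewrite (w_full _ m.+1 m.+4.+1 x ltac:(lia)) //. by rewrite [RHS](@sum_shift R _ m.+4) mul0n mul0r add0r.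
have Hg' : \sum_(0 <= i < m.+4) g i = harm_geom_poly m.+2 x.
  by rewrite (hw_full _ m.+2 m.+4 x ltac:(lia)).
have Hu' : \sum_(0 <= i < m.+4) u i = geom_poly m.+1 x.
  by rewrite (w_full _ m.+1 m.+4 x ltac:(lia)).
rewrite Hg Hu Hg' Hu'.
ring.
Qed.
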